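(* Let $G=SL_2$ over $k=\overline{\mathbb F}_p$, $U$ the unipotent radical of the (negative) Borel subgroup, $r\ge1$, and $n$ a positive integer. Then the restriction of the Weyl module $V(np^r)$ to $U_r$ satisfies $V(np^r)|_{U_r}\cong k\oplus (kU_r)^{\oplus n}$.
   Context: $U_r$ is the $r$-th Frobenius kernel of $U$; its group algebra $kU_r=\operatorname{Dist}(U_r)$ is the divided power algebra with basis $x^{(i)}=x^i/i!$, $0\le i\le p^r-1$. For $\lambda\in\mathbb Z_{\ge0}=X(T)_+$, $V(\lambda)$ is the Weyl module of highest weight $\lambda$, which for $SL_2$ is the $\lambda$-th symmetric power of the natural $2$-dimensional module, of dimension $\lambda+1$. *)

(* Defs.v *)
From HB Require Import structures.
From mathcomp Require Import all_boot all_order all_algebra all_field.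
Set Implicit Arguments. Unset Strict Implicit. Unset Printing Implicit Defensive.
Import GRing.Theory.
Local Open Scope ring_scope.

(* A (finite-dimensional) module over kU_r = Dist(U_r), U_r the r-th Frobenius
   kernel of U = {[[1,0],[t,1]]}, is given by the matrices (acting on row
   vectors, v |-> v *m A i) by which the divided-power basis elements
   x^(i), 0 <= i < p^r, act. *)

(* Weyl module V(lam) = Sym^lam(k^2), basis e_a = e1^(lam-a) e2^a (a <= lam).
   u(t) = [[1,0],[t,1]] : e1 |-> e1 + t e2, e2 |-> e2, so
   u(t) e_a = sum_i t^i C(lam-a, i) e_(a+i); x^(i) acts by the coefficient
   of t^i:  x^(i) . e_a = C(lam-a,i) e_(a+i). *)
Definition weyl_act (k : fieldType) (lam i : nat) : 'M[k]_(lam.+1) :=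
  \matrix_(a, b) (if (b : nat) == (a + i)%N then ('C(lam - a, i))%:R else 0).

(* The regular module kU_r (p^r = N): x^(i) x^(a) = C(a+i,i) x^(a+i),
   which is 0 when a+i >= N. *)
Definition reg_act (k : fieldType) (N i : nat) : 'M[k]_N :=
  \matrix_(a, b) (if (b : nat) == (a + i)%N then ('C(a + i, i))%:R else 0).

Definition triv_act (k : fieldType) (i : nat) : 'M[k]_1 :=
  ((i == 0%N)%:R)%:M.

Definition triv_plus_free_act (k : fieldType) (N n i : nat)
  : 'M[k]_(1 + \sum_(j < n) N) :=
  block_mx (triv_act k i) 0 0 (\mxdiag_(j < n) reg_act k N i).

Definition kUr_iso (k : fieldType) (N m1 m2 : nat)
  (A : nat -> 'M[k]_m1) (B : nat -> 'M[k]_m2) : Prop :=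
  exists (P : 'M[k]_(m1, m2)) (Q : 'M[k]_(m2, m1)),
    [/\ P *m Q = 1%:M, Q *m P = 1%:M &
        forall i, (i < N)%N -> A i *m P = P *m B i].

(* Main.v *)
Require Import Defs.
From HB Require Import structures.
From mathcomp Require Import all_boot all_order all_algebra all_field.
From Stdlib Require Import Lia.
Import GRing.Theory.
Local Open Scope ring_scope.

Section Bin.
Variables (k : fieldType) (p r : nat).
Hypothesis charp : p \in [pchar k].
Local Notation N := (p ^ r)%N.

Lemma coefX1 (m i : nat) : (('X + 1 : {poly k}) ^+ m)`_i = ('C(m, i))%:R.
Proof.
rewrite exprD1n coef_sum.
under eq_bigr => j _ do rewrite coefMn coefXn.
have [lim|him] := leqP i m.
  rewrite (bigD1 (Ordinal (lim : i < m.+1)%N)) //= eqxx mulr1n big1 ?addr0 //.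
  move=> j hj; case: (i =P j) => [e|_]; last by rewrite mul0rn.
  by case/negP: hj; apply/eqP/val_inj; rewrite /= e.
rewrite bin_small // big1 // => j _; case: (i =P j) => [e|_]; last by rewrite mul0rn.
have := ltn_ord j; rewrite -e ltnS leqNgt him //.

Qed.

Lemma X1N : (('X + 1 : {poly k}) ^+ N) = 'X^N + 1.
Proof.
rewrite exprDn_pchar ?expr1n //.
have pr := pcharf_prime charp.
have cp : p \in [pchar {poly k}] by rewrite pchar_poly.
rewrite (eq_pnat _ (pcharf_eq cp)) pnatX pnat_id ?orbT //.
Qed.

Lemma binN (m i : nat) : (i < N)%N -> ('C(m + N, i))%:R = ('C(m, i))%:R :> k.
Proof.
move=> hi; rewrite -!coefX1 exprD X1N mulrDr mulr1 coefD coefMXn hi add0r //.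
Qed.

Lemma binmod (x i : nat) : (i < N)%N -> ('C(x, i))%:R = ('C(x %% N, i))%:R :> k.
Proof.
move=> hi; rewrite {1}(divn_eq x N); elim: (x %/ N)%N => [|q IH]; first by rewrite mul0n add0n.
by rewrite mulSn -addnA addnC binN.
Qed.

Lemma Ngt0 : (0 < N)%N.
Proof. by rewrite expn_gt0 prime_gt0 // (pcharf_prime charp). Qed.

Lemma binNm1 (b : nat) : (b < N)%N -> ('C(N.-1, b))%:R = (-1) ^+ b :> k.
Proof.
elim: b => [|b IH] hb; first by rewrite bin0.
have h0 : ('C(N, b.+1))%:R = 0 :> k by rewrite -[N]add0n binN // bin0n.
move: h0; rewrite -(prednK Ngt0) binS natrD IH ?(ltnW hb) // => /eqP.
by rewrite addr_eq0 => /eqP ->; rewrite exprS mulN1r.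
Qed.

End Bin.

Lemma trinom (n u i : nat) : (u + i <= n)%N ->
  ('C(n, u) * 'C(n - u, i) = 'C(n, u + i) * 'C(u + i, u))%N.
Proof.
move=> h.
have hu : (u <= n)%N by apply: leq_trans h; rewrite leq_addr.
have hi : (i <= n - u)%N by rewrite leq_subRL.
have pos : (0 < u`! * i`! * (n - u - i)`!)%N by rewrite !muln_gt0 !fact_gt0.
apply/eqP; rewrite -(eqn_pmul2r pos); apply/eqP.
transitivity (n`!).
  rewrite -(bin_fact hu) -(bin_fact hi).
  rewrite !mulnA; congr (_ * _)%N; rewrite -!mulnA; congr (_ * _)%N.
  by rewrite mulnCA.
rewrite -(bin_fact h) -(bin_fact (leq_addr i u : u <= u + i)%N) addKn subnDA.
rewrite !mulnA; congr (_ * _)%N; rewrite -!mulnA; congr (_ * _)%N.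
Qed.

Lemma sq_sign (k : fieldType) (e : nat) : (-1) ^+ e * (-1) ^+ e = 1 :> k.
Proof. by rewrite -exprMn mulrNN mulr1 expr1n. Qed.

Lemma binF2 (k : fieldType) (p r : nat) (charp : p \in [pchar k]) (u i : nat) :
  (u + i < p ^ r)%N ->
  ('C((p ^ r).-1 - u, i))%:R = (-1) ^+ i * ('C(u + i, i))%:R :> k.
Proof.
move=> h.
have h' : (u + i <= (p ^ r).-1)%N by rewrite -ltnS prednK // (@Ngt0 k p r charp).
have := congr1 (fun x => x%:R : k) (trinom _ _ _ h'); rewrite /= !natrM.
rewrite !(@binNm1 k p r charp) //; last by apply: leq_ltn_trans h; rewrite leq_addr.
have -> : 'C(u + i, u) = 'C(u + i, i).
  by rewrite -bin_sub ?leq_addr // addKn.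
move=> e.
transitivity ((-1) ^+ u * ((-1) ^+ u * ('C((p ^ r).-1 - u, i))%:R) :> k).
  by rewrite mulrA sq_sign mul1r.
by rewrite e mulrA exprD mulrA sq_sign mul1r.
Qed.
Lemma modrev (n N s : nat) : (0 < N)%N -> (s < n * N)%N ->
  ((n * N - s.+1) %% N = N.-1 - s %% N)%N.
Proof.
move=> hN hs.
have hm : (s %/ N < n)%N by rewrite ltn_divLR.
have hu : (s %% N < N)%N by rewrite ltn_pmod.
have e : (n * N - s.+1 = (n - (s %/ N).+1) * N + (N.-1 - s %% N))%N.
  have es := divn_eq s N.
  move: hm hu es; set m := (s %/ N)%N; set u := (s %% N)%N => hm hu es.
  have en : n = (m.+1 + (n - m.+1))%N by rewrite subnKC.
  rewrite {1}en es mulnDl mulSn.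
  move: (m * N)%N ((n - m.+1) * N)%N => X Y.
  rewrite -subn1; move/leP: hu => hu.
  rewrite -!plusE -!minusE; lia.
rewrite e modnMDl modn_small //.
by apply: leq_ltn_trans (leq_subr _ _) _; rewrite ltn_predL.
Qed.
Lemma sum_lt (n N j : nat) : (j <= n)%N -> (\sum_(i < n | (i < j)%N) N)%N = (j * N)%N.
Proof.
move=> hj.
rewrite -(big_ord_widen_cond _ (fun _ => true) (fun _ => N) hj) /=.
by rewrite sum_nat_const card_ord.
Qed.

Lemma sig_val (n N : nat) (s : 'I_(\sum_(j < n) N)) :
  (s : nat) = (tagnat.sig1 s * N + tagnat.sig2 s)%N.
Proof.
rewrite {1}(tagnat.rect s) sum_lt //; exact: ltnW.
Qed.

Lemma mxdiag_entry (k : fieldType) (n N : nat) (f : nat -> nat -> k) (s t : 'I_(\sum_(j < n) N)) :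
  (\mxdiag_(j < n) (\matrix_(a, b) f a b : 'M[k]_N)) s t =
  if ((s %/ N)%N == (t %/ N)%N) then f (s %% N)%N (t %% N)%N else 0.
Proof.
have hN : (0 < N)%N.
  case: N s {t f} => // s; exfalso; have := ltn_ord s; rewrite [X in (_ < X)%N]big1 //.
have ds : (s %/ N = tagnat.sig1 s)%N /\ (s %% N = tagnat.sig2 s)%N.
  by rewrite sig_val divnMDl // modnMDl divn_small ?modn_small ?addn0.
have dt : (t %/ N = tagnat.sig1 t)%N /\ (t %% N = tagnat.sig2 t)%N.
  by rewrite sig_val divnMDl // modnMDl divn_small ?modn_small ?addn0.
case: ds dt => -> -> [-> ->].
rewrite /mxdiag /mxblock mxE.
case: eqP => [e|ne].
  by rewrite conform_mx_id mxE e eqxx.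
rewrite mxE; case: ifP => // h; exfalso; apply: ne; exact/eqP.
Qed.


Definition sg (k : fieldType) (N x : nat) : k :=
  if x == 0%N then 1 else (-1) ^+ ((x.-1) %% N)%N.

Definition Bn (k : fieldType) (N i c d : nat) : k :=
  if c == 0%N then ((d == 0%N) && (i == 0%N))%:R
  else if d == 0%N then 0
  else if ((c.-1) %/ N == (d.-1) %/ N)%N then
     (if ((d.-1) %% N == (c.-1) %% N + i)%N then ('C((c.-1) %% N + i, i))%:R else 0)
  else 0.

Lemma sg_sq (k : fieldType) N x : sg k N x * sg k N x = 1.
Proof. by rewrite /sg; case: eqP => _; rewrite ?mulr1 ?sq_sign. Qed.

Lemma main_eq (k : fieldType) (p r : nat) (charp : p \in [pchar k]) (n i a b : nat) :
  (i < p ^ r)%N -> (a <= n * p ^ r)%N ->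
  (if b == (a + i)%N then ('C(n * p ^ r - a, i))%:R else 0) * sg k (p ^ r) b
  = sg k (p ^ r) a * Bn k (p ^ r) i a b.
Proof.
move=> hi ha.
have hN := @Ngt0 k p r charp.
set N := (p ^ r)%N in hi ha hN *.
rewrite /Bn.
case: a ha => [|s] ha.
  rewrite add0n /sg eqxx mul1r.
  case: eqP => [->|nb].
    case: i hi => [|i] hi; first by rewrite bin0 eqxx mul1r.
    rewrite subn0 (@binmod k p r charp) // modnMl bin0n mul0r andbF //.
  rewrite mul0r; case: eqP => // b0; case: eqP => // i0; case: nb; by rewrite b0 i0.
case: b => [|t].
  by rewrite /= mul0r mulr0.
rewrite addSn eqSS /=.
have hs : (s < n * N)%N by [].
have hu : (s %% N < N)%N by rewrite ltn_pmod.
have es := divn_eq s N.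
case: (eqVneq t (s + i)%N) => [et|nt].
  have hrev := modrev _ _ _ hN hs.
  rewrite (@binmod k p r charp) // hrev.
  have [hui|hui] := ltnP (s %% N + i)%N N.
    have edt : (t %/ N = s %/ N)%N.
      by rewrite et {1}es -addnA divnMDl // (divn_small hui) addn0.
    have emt : (t %% N = s %% N + i)%N.
      by rewrite et {1}es -addnA modnMDl modn_small.
    rewrite edt emt !eqxx (@binF2 k p r charp) // /sg /= emt exprD.
    have ac : forall (x y c : k), x * c * (y * x) = (x * x) * (y * c).
      by move=> x y c; rewrite [y * x]mulrC mulrACA [c * y]mulrC.
    by rewrite ac sq_sign mul1r.
  rewrite bin_small ?mul0r; last first.
    move: hui hN hu => /leP h1 /ltP h2 /ltP h3; apply/ltP; rewrite -subn1 -!minusE -!plusE in h1 h2 h3 *; lia.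
  case: eqP => _; last by rewrite mulr0.
  case: eqP => [emt|_]; last by rewrite mulr0.
  have := ltn_pmod t hN; rewrite emt ltnNge hui //.
rewrite mul0r; case: eqP => [ed|_]; last by rewrite mulr0.
case: eqP => [em|_]; last by rewrite mulr0.
case/negP: nt; apply/eqP; by rewrite (divn_eq t N) -ed em addnA -divn_eq.
Qed.

Lemma B_entry (k : fieldType) (N n i : nat) (c d : 'I_(1 + \sum_(j < n) N)) :
  triv_plus_free_act k N n i c d = Bn k N i c d.
Proof.
rewrite /triv_plus_free_act /block_mx /col_mx /row_mx !mxE.
case: (splitP c) => [c' ec|c' ec]; rewrite !mxE; case: (splitP d) => [d' ed|d' ed].
- by rewrite /Bn ec ed [c']ord1 [d']ord1 !mxE /= mulr1n.
- by rewrite mxE /Bn ec ed [c']ord1.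
- by rewrite mxE /Bn ec ed [d']ord1.
- rewrite (@mxdiag_entry k n N (fun a b => if b == (a + i)%N then ('C(a + i, i))%:R else 0)).
  by rewrite /Bn ec ed /= !add0n.
Qed.

Lemma sum_delta (k : fieldType) m (F : 'I_m -> k) (j : nat) (c0 : 'I_m) :
  j = c0 -> \sum_(c < m) (j == c :> nat)%:R * F c = F c0.
Proof.
move=> e; rewrite (bigD1 c0) //= e eqxx mul1r big1 ?addr0 // => c hc.
case: eqP => [e'|_]; last by rewrite mul0r.
by case/negP: hc; apply/eqP/val_inj.
Qed.

Theorem proposition7p2 (p : nat) (k : closedFieldType)
  (charp : p \in [pchar k])
  (alg_over_Fp : forall x : k, exists m : nat, (0 < m)%N /\ x ^+ (p ^ m) = x)
  (r n : nat) (hr : (1 <= r)%N) (hn : (0 < n)%N) :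
  kUr_iso (p ^ r) (weyl_act k (n * p ^ r)) (triv_plus_free_act k (p ^ r) n).
Proof.
have hdim : ((n * p ^ r).+1 = 1 + \sum_(j < n) p ^ r)%N.
  by rewrite sum_nat_const card_ord add1n.
pose P : 'M[k]_((n * p ^ r).+1, 1 + \sum_(j < n) p ^ r) :=
  \matrix_(a, c) ((a == c :> nat)%:R * sg k (p ^ r) a).
pose Q : 'M[k]_(1 + \sum_(j < n) p ^ r, (n * p ^ r).+1) :=
  \matrix_(c, a) ((c == a :> nat)%:R * sg k (p ^ r) a).
exists P, Q; split.
- apply/matrixP => a a'; rewrite !mxE.
  under eq_bigr do rewrite !mxE -mulrA.
  rewrite (@sum_delta k _ _ _ (cast_ord hdim a)) //=.
  case: eqP => [/val_inj <-|ne]; first by rewrite eqxx mul1r sg_sq.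
  rewrite mul0r mulr0; case: eqP => [h|_] //; by case: ne; rewrite h.
- apply/matrixP => c c'; rewrite !mxE.
  under eq_bigr do rewrite !mxE -mulrA.
  rewrite (@sum_delta k _ _ _ (cast_ord (esym hdim) c)) //=.
  case: eqP => [/val_inj <-|ne]; first by rewrite eqxx mul1r sg_sq.
  rewrite mul0r mulr0; case: eqP => [h|_] //; by case: ne; rewrite h.
move=> i hi; apply/matrixP => a c; rewrite !mxE.
under eq_bigr do rewrite [P _ _]mxE mulrCA eq_sym.
rewrite (@sum_delta k _ _ _ (cast_ord (esym hdim) c)) //.
rewrite (eq_bigr (fun j : 'I_(1 + \sum_(j0 < n) p ^ r) => (a == j :> nat)%:R * (sg k (p ^ r) a * triv_plus_free_act k (p ^ r) n i j c))); last by move=> j _; rewrite mxE -mulrA.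
rewrite (@sum_delta k _ _ _ (cast_ord hdim a)) //.
rewrite B_entry /weyl_act mxE /=.
apply: main_eq => //.
by rewrite -ltnS.
Qed.
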